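(* Let $T=(V,E)$ be a decision tree with root $r$. Define $w:V\to\mathbb{R}_{\ge0}$ by $w_v=0$ for every leaf $v$ and, recursively for every internal node $v$ with children $C_v$, $w_v$ equal to the optimal value of the semidefinite program \[\min\ \max_{c\in C_v}\big(w_c+X[c,c]+Y[c,c]\big)\quad\text{s.t.}\quad X[c_1,c_2]-Y[c_1,c_2]=1\ \ (c_1,c_2\in C_v,\ c_1\ne c_2),\qquad 0\preceq X,Y\in\mathbb{R}^{C_v\times C_v}.\] Then $w$ is an optimal weighting scheme for $T$, i.e. $w$ is a weighting scheme and $w_r=\mathsf{WDT}(T)$.
   Context: A decision tree is a finite rooted tree whose internal nodes each query a coordinate of the input and whose children correspond to distinct query outcomes; leaves carry outputs. A weighting scheme for $T$ is $w:V\to\mathbb{R}_{\ge0}$ such that $w_v=0$ for all leaves and, for every internal node $v$ with children $C_v$, there exist positive semidefinite $X,Y\in\mathbb{C}^{C_v\times C_v}$ with $X[c_1,c_2]-Y[c_1,c_2]=1$ for all distinct $c_1,c_2\in C_v$ and $w_v-w_c\ge X[c,c]+Y[c,c]$ for all $c\in C_v$. $\mathsf{WDT}(T)$ is the minimum of $w_r$ over all weighting schemes $w$ for $T$. *)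

(* Defs.v *)
From mathcomp Require Import all_boot all_order all_algebra.
From mathcomp Require Import all_classical all_reals.
From mathcomp Require Import complex.
Set Implicit Arguments. Unset Strict Implicit. Unset Printing Implicit Defensive.
Import Order.TTheory GRing.Theory Num.Theory.
Local Open Scope ring_scope.
Local Open Scope classical_set_scope.

(* A decision tree, seen as a finite rooted ordered tree: a node carries the
   list of its children (one per distinct query outcome).  A node with no
   children is a leaf; the queried coordinates / outputs do not affect WDT. *)
Inductive dtree := DNode of seq dtree.

(* Vertices are addressed by paths from the root: [::] is the root and
   rcons p i is the i-th child of vertex p. *)
Fixpoint subtree (t : dtree) (p : seq nat) : option dtree :=
  match p with
  | [::] => Some t
  | i :: p' => let: DNode cs := t in
               if (i < size cs)%N then subtree (nth (DNode [::]) cs i) p' else None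
  end.

Definition is_vertex (t : dtree) (p : seq nat) : Prop := exists s, subtree t p = Some s.

Definition cpsd (R : rcfType) (n : nat) (A : 'M[R[i]]_n) : Prop :=
  (map_mx (fun z => z^*) A)^T = A /\
  forall v : 'cV[R[i]]_n, 0 <= ((map_mx (fun z => z^*) v)^T *m A *m v) 0 0.

Definition rpsd (R : realType) (n : nat) (A : 'M[R]_n) : Prop :=
  A^T = A /\ forall v : 'cV[R]_n, 0 <= (v^T *m A *m v) 0 0.

(* Weighting scheme for t (w is a function on vertices = paths; its values
   off the vertex set are irrelevant). *)
Definition weighting_scheme (R : realType) (t : dtree) (w : seq nat -> R) : Prop :=
  [/\ (forall p, is_vertex t p -> 0 <= w p),
      (forall p, subtree t p = Some (DNode [::]) -> w p = 0) &
      (forall p cs, subtree t p = Some (DNode cs) -> cs <> [::] ->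
         exists X Y : 'M[R[i]]_(size cs),
           [/\ cpsd X, cpsd Y,
               (forall c1 c2 : 'I_(size cs), c1 != c2 -> X c1 c2 - Y c1 c2 = 1) &
               (forall c : 'I_(size cs), X c c + Y c c <= ((w p - w (rcons p c))%:C)%C)])].

Definition WDT (R : realType) (t : dtree) : R :=
  inf [set x : R | exists w : seq nat -> R, weighting_scheme t w /\ x = w [::]].

(* Optimal value of the SDP
     min max_c (wc c + X[c,c] + Y[c,c])  s.t. X[c1,c2]-Y[c1,c2]=1 (c1<>c2), X,Y >= 0 real,
   written as the infimum over feasible (X,Y,s) of s with s >= each term. *)
Definition sdp_value (R : realType) (k : nat) (wc : 'I_k -> R) : R :=
  inf [set s : R | exists X Y : 'M[R]_k,
         [/\ rpsd X, rpsd Y,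
             (forall c1 c2 : 'I_k, c1 != c2 -> X c1 c2 - Y c1 c2 = 1) &
             (forall c : 'I_k, wc c + X c c + Y c c <= s)]].

(* Main.v *)
Require Import Defs.
From mathcomp Require Import all_boot all_order all_algebra.
From mathcomp Require Import all_classical all_reals.
From mathcomp Require Import complex.
From mathcomp Require Import all_analysis.
From mathcomp Require Import ring lra.
Import Order.TTheory GRing.Theory Num.Theory.
Import numFieldNormedType.Exports.
Local Open Scope ring_scope.
Set Implicit Arguments. Unset Strict Implicit. Unset Printing Implicit Defensive.
Local Open Scope classical_set_scope.
Section Alg.
Variable R : realType.

Lemma NconjE (z : R[i]) : Num.conj z = conjc z.
Proof. by []. Qed.

Definition quad (k : nat) (X : 'M[R]_k) (v : 'cV[R]_k) := (v^T *m X *m v) 0 0.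

Lemma quadE k (X : 'M[R]_k) v :
  quad X v = \sum_i \sum_j v i 0 * X i j * v j 0.
Proof.
rewrite /quad mxE exchange_big /=; apply: eq_bigr => j _.
rewrite mxE big_distrl /=; apply: eq_bigr => i _; by rewrite mxE.
Qed.

Lemma delta_quad k (X : 'M[R]_k) a b :
  ((delta_mx a 0 : 'cV[R]_k)^T *m X *m (delta_mx b 0 : 'cV[R]_k)) 0 0 = X a b.
Proof.
by rewrite trmx_delta -rowE -colE !mxE.
Qed.

Lemma delta_quad' k (X : 'M[R]_k) a b :
  \sum_j (((delta_mx a 0 : 'cV[R]_k)^T *m X) 0 j * (delta_mx b 0 : 'cV[R]_k) j 0) = X a b.
Proof. by rewrite -delta_quad [RHS]mxE. Qed.

Lemma psd_diag k (X : 'M[R]_k) c : rpsd X -> 0 <= X c c.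
Proof.
by case=> _ /(_ (delta_mx c 0)); rewrite delta_quad.
Qed.

Lemma psd_off k (X : 'M[R]_k) a b (x : R) : rpsd X ->
  0 <= X a a + x * X a b + x * X b a + x * x * X b b.
Proof.
case=> _ /(_ (delta_mx a 0 + x *: delta_mx b 0)).
rewrite [(_ + _)^T]linearD /= [(_ *: _)^T]linearZ /= !mulmxDl !mulmxDr -!scalemxAl -!scalemxAr !mxE !delta_quad'.
move=> H; apply: le_trans H _; rewrite le_eqVlt; apply/orP; left; apply/eqP; ring.
Qed.


Lemma psd_sym k (X : 'M[R]_k) a b : rpsd X -> X b a = X a b.
Proof. by case=> /matrixP /(_ a b); rewrite mxE. Qed.

Lemma psd_bound k (X : 'M[R]_k) a b : rpsd X -> `|X a b| <= X a a + X b b.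
Proof.
move=> H; have h1 := psd_off a b 1 H; have h2 := psd_off a b (-1) H.
have ha := psd_diag a H; have hb := psd_diag b H.
rewrite (psd_sym a b H) in h1 h2.
rewrite ler_norml; apply/andP; split; lra.
Qed.

Lemma psdJ k : rpsd (const_mx 1 : 'M[R]_k).
Proof.
split; first by rewrite trmx_const.
move=> v; rewrite -/(quad _ v) quadE.
have -> : \sum_i \sum_j v i 0 * (const_mx 1 : 'M[R]_k) i j * v j 0 =
   (\sum_i v i 0) * (\sum_j v j 0).
  rewrite big_distrlr /=; apply: eq_bigr => i _; apply: eq_bigr => j _.
  by rewrite mxE mulr1.
by rewrite -expr2 sqr_ge0.
Qed.

Lemma psd0 k : rpsd (0 : 'M[R]_k).
Proof.
split; first by rewrite trmx0.
move=> v; rewrite -/(quad _ v) quadE big1 // => i _; rewrite big1 // => j _.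
by rewrite mxE mulr0 mul0r.
Qed.


Lemma Re_sum (I : Type) (r : seq I) (F : I -> R[i]) :
  complex.Re (\sum_(j <- r) F j) = \sum_(j <- r) complex.Re (F j).
Proof.
elim: r => [|j r IH]; first by rewrite !big_nil.
by rewrite !big_cons -IH; case: (F j) => [? ?]; case: (\sum_(j <- r) F j).
Qed.

Lemma Im_sum (I : Type) (r : seq I) (F : I -> R[i]) :
  complex.Im (\sum_(j <- r) F j) = \sum_(j <- r) complex.Im (F j).
Proof.
elim: r => [|j r IH]; first by rewrite !big_nil.
by rewrite !big_cons -IH; case: (F j) => [? ?]; case: (\sum_(j <- r) F j).
Qed.

Lemma ReM3 (u w : R[i]) (r : R) :
  complex.Re (conjc u * (r%:C)%C * w) = r * (complex.Re u * complex.Re w + complex.Im u * complex.Im w).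
Proof. case: u => a b; case: w => c d /=; ring. Qed.

Lemma ImM3 (u w : R[i]) (r : R) :
  complex.Im (conjc u * (r%:C)%C * w) = r * (complex.Re u * complex.Im w - complex.Im u * complex.Re w).
Proof. case: u => a b; case: w => c d /=; ring. Qed.

Lemma ReM3' (x y : R) (z : R[i]) :
  complex.Re (conjc (x%:C)%C * z * (y%:C)%C) = x * complex.Re z * y.
Proof. case: z => a b /=; ring. Qed.

Definition quadC k (X : 'M[R[i]]_k) (v : 'cV[R[i]]_k) :=
  ((map_mx (fun z => z^*) v)^T *m X *m v) 0 0.

Lemma quadCE k (X : 'M[R[i]]_k) v :
  quadC X v = \sum_i \sum_j conjc (v i 0) * X i j * v j 0.
Proof.
rewrite /quadC mxE exchange_big /=; apply: eq_bigr => j _.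
rewrite mxE big_distrl /=; apply: eq_bigr => i _; by rewrite !mxE.
Qed.

Lemma real_to_cpsd k (X : 'M[R]_k) : rpsd X -> cpsd (map_mx (fun r => (r%:C)%C) X).
Proof.
move=> H; split.
  by apply/matrixP => i j; rewrite !mxE NconjE conjc_real (psd_sym i j H).
move=> v; rewrite -/(quadC _ v) quadCE lecE; apply/andP; split.
  rewrite Im_sum /=.
  under eq_bigr => i _ do rewrite Im_sum; under eq_bigr => i _ do under eq_bigr => j _ do rewrite !mxE ImM3.
  set a := fun i => complex.Re (v i 0); set b := fun i => complex.Im (v i 0).
  rewrite (_ : \sum_i \sum_j _ = \sum_i \sum_j X i j * (a i * b j) - \sum_i \sum_j X i j * (b i * a j)); last first.
    rewrite -sumrB; apply: eq_bigr => i _; rewrite -sumrB; apply: eq_bigr => j _.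
    rewrite /a /b; ring.
  rewrite [X in _ - X]exchange_big /=.
  rewrite (_ : \sum_j \sum_i X i j * (b i * a j) = \sum_i \sum_j X i j * (a i * b j)); first by rewrite subrr.
  apply: eq_bigr => i _; apply: eq_bigr => j _; rewrite (psd_sym j i H); ring.
rewrite Re_sum /=.
under eq_bigr => i _ do rewrite Re_sum; under eq_bigr => i _ do under eq_bigr => j _ do rewrite !mxE ReM3.
set a := fun i => complex.Re (v i 0); set b := fun i => complex.Im (v i 0).
have ha := (proj2 H) (\col_i a i); have hb := (proj2 H) (\col_i b i).
rewrite -/(quad _ _) quadE in ha; rewrite -/(quad _ _) quadE in hb.
rewrite (_ : \sum_i \sum_j _ = \sum_i \sum_j (\col_i a i) i 0 * X i j * (\col_i a i) j 0 + \sum_i \sum_j (\col_i b i) i 0 * X i j * (\col_i b i) j 0).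
  by apply: addr_ge0.
rewrite -big_split; apply: eq_bigr => i _; rewrite -big_split; apply: eq_bigr => j _.
rewrite !mxE /a /b /=; ring.
Qed.

Lemma cpsd_to_real k (X : 'M[R[i]]_k) : cpsd X -> rpsd (map_mx (@complex.Re R) X).
Proof.
case=> H1 H2; split.
  apply/matrixP => i j; rewrite !mxE.
  move/matrixP: H1 => /(_ i j); rewrite !mxE NconjE => <-.
  by case: (X j i).
move=> v; rewrite -/(quad _ v) quadE.
have := H2 (map_mx (fun r => (r%:C)%C) v); rewrite -/(quadC _ _) quadCE lecE => /andP[_].
rewrite Re_sum /=.
under eq_bigr => i _ do rewrite Re_sum; under eq_bigr => i _ do under eq_bigr => j _ do rewrite !mxE ReM3'.
under [X in _ -> _ <= X]eq_bigr => i _ do under eq_bigr => j _ do rewrite mxE. by [].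
Qed.

End Alg.

Section Top.
Variable R : realType.
Variable I : eqType.
Import ArrowAsProduct.
Lemma cont_proj (i : I) : continuous (fun f : I -> R => f i).
Proof. exact: (@proj_continuous I (fun _ => R) i). Qed.
Lemma cont_sum (J : Type) (r : seq J) (F : J -> (I -> R) -> R) :
  (forall j, continuous (F j)) -> continuous (fun x : I -> R => \sum_(j <- r) F j x).
Proof.
move=> H; elim: r => [|j r IH].
  have -> : (fun x : I -> R => \sum_(j <- [::]) F j x) = fun=> 0.
    by apply: funext => x; rewrite big_nil.
  exact: cst_continuous.
have -> : (fun x : I -> R => \sum_(j0 <- j :: r) F j0 x) = fun x => F j x + \sum_(j0 <- r) F j0 x.
  by apply: funext => x; rewrite big_cons.
move=> x; apply: continuousD; [exact: H| exact: IH].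
Qed.
Lemma cont_cst (c : R) : continuous (fun _ : I -> R => c).
Proof. exact: cst_continuous. Qed.
Lemma cont_add (F G : (I -> R) -> R) : continuous F -> continuous G -> continuous (fun x => F x + G x).
Proof. move=> H1 H2 x; apply: continuousD; [exact: H1|exact: H2]. Qed.
Lemma cont_sub (F G : (I -> R) -> R) : continuous F -> continuous G -> continuous (fun x => F x - G x).
Proof. move=> H1 H2 x; apply: continuousB; [exact: H1|exact: H2]. Qed.
Lemma cont_mul (F G : (I -> R) -> R) : continuous F -> continuous G -> continuous (fun x => F x * G x).
Proof. move=> H1 H2 x; apply: continuousM; [exact: H1|exact: H2]. Qed.
Lemma closed_all_le (A : Type) (F G : A -> (I -> R) -> R) :
  (forall a, continuous (F a)) -> (forall a, continuous (G a)) ->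
  closed [set x | forall a, F a x <= G a x].
Proof.
move=> HF HG.
have -> : [set x | forall a, F a x <= G a x] = \bigcap_(a in setT) ((fun x => G a x - F a x) @^-1` [set y | 0 <= y]).
  apply/seteqP; split => x /=.
    by move=> H a _; rewrite /= subr_ge0.
  by move=> H a; have := H a Logic.I; rewrite /= subr_ge0.
apply: closed_bigI => a _.
apply: (proj1 (continuous_closedP _)); last exact: closed_ge.
exact: cont_sub.
Qed.
Lemma closed_all_eq (A : Type) (F G : A -> (I -> R) -> R) :
  (forall a, continuous (F a)) -> (forall a, continuous (G a)) ->
  closed [set x | forall a, F a x = G a x].
Proof.
move=> HF HG.
have -> : [set x | forall a, F a x = G a x] = [set x | forall a, F a x <= G a x] `&` [set x | forall a, G a x <= F a x].
  apply/seteqP; split => x /=.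
    by move=> H; split => a; rewrite H.
  by move=> [H1 H2] a; apply/eqP; rewrite eq_le H1 H2.
by apply: closedI; apply: closed_all_le.
Qed.
Lemma box_compact (M : R) : compact [set f : I -> R | forall i, `[-M, M]%classic (f i)].
Proof.
apply: (@tychonoff I (fun _ => R) (fun _ => `[-M, M]%classic)) => i.
exact: segment_compact.
Qed.
End Top.

Section Attain.
Variable R : realType.
Variables (k : nat) (wc : 'I_k -> R).
Hypothesis hk : (0 < k)%N.
Import ArrowAsProduct.

Definition Sset := [set s : R | exists X Y : 'M[R]_k,
         [/\ rpsd X, rpsd Y,
             (forall c1 c2 : 'I_k, c1 != c2 -> X c1 c2 - Y c1 c2 = 1) &
             (forall c : 'I_k, wc c + X c c + Y c c <= s)]].

Lemma sdp_valueE : sdp_value wc = inf Sset.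
Proof. by []. Qed.

Definition Bw := \sum_c `|wc c|.

Lemma wc_le c : `|wc c| <= Bw.
Proof. by rewrite /Bw (bigD1 c) //= lerDl sumr_ge0. Qed.

Lemma Bw_ge0 : 0 <= Bw.
Proof. by rewrite sumr_ge0. Qed.

Lemma S_ne : Sset (Bw + 1).
Proof.
exists (const_mx 1), 0; split; [exact: psdJ|exact: psd0| |].
  by move=> c1 c2 _; rewrite !mxE subr0.
move=> c; rewrite !mxE addr0 lerD2r.
by have := wc_le c; rewrite ler_norml => /andP[].
Qed.

Lemma S_lb s : Sset s -> - Bw <= s.
Proof.
case=> X [Y] [hX hY _ hd].
have c0 : 'I_k := Ordinal hk.
have := hd c0; have := psd_diag c0 hX; have := psd_diag c0 hY.
have := wc_le c0; rewrite ler_norml => /andP[h1 _].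
move=> *; lra.
Qed.

Lemma S_hasinf : has_inf Sset.
Proof. split; first by exists (Bw + 1); exact: S_ne.
by exists (- Bw) => s /S_lb. Qed.

Lemma S_ge s : Sset s -> inf Sset <= s.
Proof. by move=> Hs; apply: (ge_inf (proj2 S_hasinf)). Qed.

Lemma s0_ub : inf Sset <= Bw + 1.
Proof. exact/S_ge/S_ne. Qed.

Lemma s0_lb : - Bw <= inf Sset.
Proof. apply: lb_le_inf; first by exists (Bw + 1); exact: S_ne.
by move=> s /S_lb. Qed.

Definition Ix := option (bool * 'I_k * 'I_k).
Definition Mof (b : bool) (f : Ix -> R) : 'M[R]_k := \matrix_(i, j) f (Some (b, i, j)).

Definition Fe := [set f : Ix -> R | [/\ rpsd (Mof true f), rpsd (Mof false f),
   (forall c1 c2 : 'I_k, c1 != c2 -> Mof true f c1 c2 - Mof false f c1 c2 = 1),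
   (forall c, wc c + Mof true f c c + Mof false f c c <= f None) &
   f None <= inf Sset + 1]].

Definition Mb := 4 * Bw + 4.

Lemma Fe_box : Fe `<=` [set f : Ix -> R | forall i, `[- Mb, Mb]%classic (f i)].
Proof.
move=> f [hX hY _ hd ht] i; rewrite set_itvcc /=; rewrite -ler_norml.
have := s0_ub; have := Bw_ge0 => ? ?.
have hdiag : forall b c, Mof b f c c <= 2 * Bw + 2.
  move=> b c; have := hd c; have := psd_diag c hX; have := psd_diag c hY.
  have := wc_le c; rewrite ler_norml => /andP[h1 _].
  by case: b => *; lra.
case: i => [[[b a] c]|].
  have := psd_bound a c (if b then hX else hY).
  have -> : f (Some (b, a, c)) = Mof b f a c by rewrite mxE.
  have := hdiag b a; have := hdiag b c; rewrite /Mb.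
  by case: b => * ; lra.
have c0 : 'I_k := Ordinal hk.
have := hd c0; have := psd_diag c0 hX; have := psd_diag c0 hY.
move=> h2 h3 h4.
have /andP[h1 _] : - Bw <= wc c0 <= Bw by rewrite -ler_norml wc_le.
rewrite ler_norml /Mb; apply/andP; split; lra.
Qed.


Lemma cont_quad b (v : 'cV[R]_k) : continuous (fun f : Ix -> R => quad (Mof b f) v).
Proof.
have -> : (fun f : Ix -> R => quad (Mof b f) v) =
   (fun f => \sum_(i <- index_enum 'I_k) \sum_(j <- index_enum 'I_k) v i 0 * f (Some (b, i, j)) * v j 0).
  apply: funext => f; rewrite quadE; apply: eq_bigr => i _; apply: eq_bigr => j _.
  by rewrite mxE.
apply: cont_sum => i; apply: cont_sum => j.
apply: cont_mul; last exact: cont_cst.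
apply: cont_mul; first exact: cont_cst.
exact: cont_proj.
Qed.

Lemma Fe_closed : closed Fe.
Proof.
pose Psym b := [set f : Ix -> R | forall p : 'I_k * 'I_k, f (Some (b, p.2, p.1)) = f (Some (b, p.1, p.2))].
pose Ppsd b := [set f : Ix -> R | forall v : 'cV[R]_k, (fun _ (_ : Ix -> R) => 0) v f <= quad (Mof b f) v].
pose Poff := [set f : Ix -> R | forall p : 'I_k * 'I_k,
   (if p.1 != p.2 then f (Some (true, p.1, p.2)) - f (Some (false, p.1, p.2)) else 1) = (fun _ (_ : Ix -> R) => 1) p f].
pose Pdiag := [set f : Ix -> R | forall c, wc c + f (Some (true, c, c)) + f (Some (false, c, c)) <= f None].
pose Ptop := [set f : Ix -> R | forall u : unit, f None <= (fun _ (_ : Ix -> R) => inf Sset + 1) u f].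
have rp b f : rpsd (Mof b f) <-> Psym b f /\ Ppsd b f.
  split.
    case=> h1 h2; split => [[i j]|v] /=; last exact: h2 v.
    by move/matrixP: h1 => /(_ j i); rewrite !mxE.
  case=> h1 h2; split; last exact: h2.
  by apply/matrixP => i j; rewrite !mxE (h1 (i, j)).
have -> : Fe = Psym true `&` Ppsd true `&` Psym false `&` Ppsd false `&` Poff `&` Pdiag `&` Ptop.
  apply/seteqP; split => f.
    case=> /rp [h1 h2] /rp [h3 h4] h5 h6 h7.
    split; [split; [split; [split; [split; [split|]|]|]|]|] => //.
    - move=> [i j] /=; case: ifP => // hij; have := h5 i j hij; by rewrite !mxE.
    - by move=> c; have := h6 c; rewrite !mxE.
  case=> [[[[[[h1 h2] h3] h4] h5] h6] h7]; split.
  - by apply/rp.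
  - by apply/rp.
  - by move=> c1 c2 hc; have := h5 (c1, c2); rewrite /= hc !mxE.
  - by move=> c; rewrite !mxE; exact: h6.
  - exact: h7 tt.
have cs b : closed (Psym b).
  apply: closed_all_eq => p; exact: cont_proj.
have cp b : closed (Ppsd b).
  apply: closed_all_le => v; [exact: cont_cst| exact: cont_quad].
repeat apply: closedI => //.
- apply: closed_all_eq => p; last exact: cont_cst.
  case: (p.1 != p.2); last exact: cont_cst.
  by apply: cont_sub; exact: cont_proj.
- apply: (@closed_all_le _ _ _ (fun c f => wc c + f (Some (true, c, c)) + f (Some (false, c, c))) (fun _ f => f None)) => c.
    by apply: cont_add; [apply: cont_add; [exact: cont_cst|exact: cont_proj]|exact: cont_proj].
  exact: cont_proj.
- apply: closed_all_le => u; [exact: cont_proj|exact: cont_cst].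
Qed.


Lemma sdp_attained : exists X Y : 'M[R]_k, [/\ rpsd X, rpsd Y,
   (forall c1 c2 : 'I_k, c1 != c2 -> X c1 c2 - Y c1 c2 = 1) &
   (forall c, wc c + X c c + Y c c <= sdp_value wc)].
Proof.
have cF : compact Fe.
  apply: (subclosed_compact Fe_closed (@box_compact R Ix Mb)); exact: Fe_box.
have cI : compact ((fun f : Ix -> R => f None) @` Fe).
  apply: continuous_compact => //; apply: continuous_subspaceT; exact: cont_proj.
have clI := compact_closed (@Rhausdorff R) cI.
have : closure ((fun f : Ix -> R => f None) @` Fe) (inf Sset).
  move=> B /nbhs_ballP [e e0 He].
  have m0 : 0 < Num.min e 1 by rewrite lt_min e0 ltr01.
  have [s Ss hs] := inf_adherent m0 S_hasinf.
  have sge := S_ge Ss.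
  case: Ss => X [Y] [hX hY ho hd].
  pose f : Ix -> R := fun o => match o with None => s | Some (b, i, j) => if b then X i j else Y i j end.
  have MX : Mof true f = X by apply/matrixP => i j; rewrite mxE.
  have MY : Mof false f = Y by apply/matrixP => i j; rewrite mxE.
  have hm1 : Num.min e 1 <= 1 by rewrite ge_min lexx orbT.
  have hme : Num.min e 1 <= e by rewrite ge_min lexx.
  exists s; split.
    exists f => //; split; rewrite ?MX ?MY //=; lra.
  apply: He; rewrite /ball /=.
  rewrite ler0_norm; last lra.
  lra.
rewrite sdp_valueE; move/clI => [f [hX hY ho hd ht] <-].
by exists (Mof true f), (Mof false f); split.
Qed.

End Attain.

Lemma dtree_ind2 (P : dtree -> Prop)
  (H : forall cs, (forall i, (i < size cs)%N -> P (nth (DNode [::]) cs i)) -> P (DNode cs)) :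
  forall t, P t.
Proof.
fix F 1; case=> cs; apply: H.
elim: cs => [|c cs IH] i hi; first discriminate hi.
case: i hi => [|i] hi; [exact: (F c) | exact: (IH i hi)].
Qed.

Lemma subtree_rcons t p i : subtree t (rcons p i) =
  match subtree t p with
  | Some (DNode cs) => if (i < size cs)%N then Some (nth (DNode [::]) cs i) else None
  | None => None end.
Proof.
elim: p t => [|j p IH] [cs] //=.
all: case: ifP => _ //.
Qed.

Lemma Re_sub (R : realType) (a b : R[i]) : complex.Re (a - b) = complex.Re a - complex.Re b.
Proof. by case: a; case: b. Qed.
Lemma Re_add (R : realType) (a b : R[i]) : complex.Re (a + b) = complex.Re a + complex.Re b.
Proof. by case: a; case: b. Qed.

Section Main.
Variables (R : realType) (t : dtree) (w : seq nat -> R).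
Hypothesis hleaf : forall p, subtree t p = Some (DNode [::]) -> w p = 0.
Hypothesis hint : forall p cs, subtree t p = Some (DNode cs) -> cs <> [::] ->
     w p = sdp_value (fun c : 'I_(size cs) => w (rcons p c)).

Lemma claim s : forall p, subtree t p = Some s ->
  0 <= w p /\ (forall w', weighting_scheme t w' -> w p <= w' p).
Proof.
elim/dtree_ind2: s => cs IH p hp.
have [Hn|hne] : cs = [::] \/ cs <> [::] by case: (cs) => [|? ?]; [left|right].
  rewrite Hn in hp; rewrite (hleaf hp); split => // w' [_ hl _]; by rewrite (hl _ hp).
have hk : (0 < size cs)%N by case: (cs) hne.
have hch : forall c : 'I_(size cs), subtree t (rcons p c) = Some (nth (DNode [::]) cs c).
  by move=> c; rewrite subtree_rcons hp ltn_ord.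
have IHc : forall c : 'I_(size cs), 0 <= w (rcons p c) /\
   (forall w', weighting_scheme t w' -> w (rcons p c) <= w' (rcons p c)).
  by move=> c; apply: (IH c (ltn_ord c)); exact: hch.
have hw := hint hp hne.
split.
  rewrite hw sdp_valueE; apply: lb_le_inf; first by exists (Bw (fun c : 'I_(size cs) => w (rcons p c)) + 1); exact: S_ne.
  move=> s [X [Y [hX hY _ hd]]].
  pose c0 : 'I_(size cs) := Ordinal hk.
  have := hd c0; have := psd_diag c0 hX; have := psd_diag c0 hY; have := (IHc c0).1.
  move=> *; lra.
move=> w' hws; have [_ _ hi] := hws.
have [X [Y [hX hY ho hd]]] := hi p cs hp hne.
rewrite hw sdp_valueE; apply: S_ge => //.
exists (map_mx (@complex.Re R) X), (map_mx (@complex.Re R) Y); split.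
- exact: cpsd_to_real.
- exact: cpsd_to_real.
- by move=> c1 c2 h; rewrite !mxE -Re_sub (ho c1 c2 h).
move=> c; rewrite !mxE.
have := hd c; rewrite lecE => /andP[_]; rewrite Re_add /= => h.
have := (IHc c).2 w' hws; lra.
Qed.


Lemma main_thm : weighting_scheme t w /\ w [::] = WDT R t.
Proof.
have ws : weighting_scheme t w.
  split.
  - by move=> p [s hs]; exact: (claim hs).1.
  - exact: hleaf.
  move=> p cs hp hne.
  have hk : (0 < size cs)%N by case: (cs) hne.
  have [X [Y [hX hY ho hd]]] := sdp_attained (fun c : 'I_(size cs) => w (rcons p c)) hk.
  exists (map_mx (fun r => (r%:C)%C) X), (map_mx (fun r => (r%:C)%C) Y); split.
  - exact: real_to_cpsd.
  - exact: real_to_cpsd.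
  - by move=> c1 c2 h; rewrite !mxE -raddfB /= (ho c1 c2 h).
  move=> c; rewrite !mxE -raddfD /= lecR.
  have := hd c; rewrite -(hint hp hne) => h; lra.
split => //.
have hr : subtree t [::] = Some t by [].
apply/eqP; rewrite eq_le; apply/andP; split.
  apply: lb_le_inf; first by exists (w [::]), w.
  by move=> x [w' [hw' ->]]; exact: (claim hr).2.
apply: (@ge_inf R); last by exists w.
by exists (w [::]) => x [w' [hw' ->]]; exact: (claim hr).2.
Qed.

End Main.

Local Close Scope classical_set_scope.
Unset Implicit Arguments.

Theorem theorem6p3 (R : realType) (t : dtree) (w : seq nat -> R) :
  (forall p, subtree t p = Some (DNode [::]) -> w p = 0) ->
  (forall p cs, subtree t p = Some (DNode cs) -> cs <> [::] ->
     w p = sdp_value (fun c : 'I_(size cs) => w (rcons p c))) ->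
  weighting_scheme t w /\ w [::] = WDT R t.
Proof. move=> h1 h2; exact: (main_thm h1 h2). Qed.
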